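(* The following varieties do not have the amalgamation property: (1) $\mathsf{SemCRL}$; (2) $\mathsf{SemCIRL}$; (3) $\mathsf{SemFL_e}$; (4) $\mathsf{MTL}$; (5) for every $n\ge 2$, the $n$-potent subvariety of each of the varieties in (1)–(4).
   Context: A residuated lattice is an algebra $(L,\wedge,\vee,\cdot,\backslash,/,1)$ where $(L,\wedge,\vee)$ is a lattice, $(L,\cdot,1)$ is a monoid, and $xy\le z \iff y\le x\backslash z \iff x\le z/y$. It is commutative if $\cdot$ is commutative (then $x\backslash y=y/x$, written $x\to y$), integral if $1$ is the greatest element, and semilinear if it is a subdirect product of totally ordered residuated lattices (for commutative ones, equivalently, it satisfies $(x\to y)\vee(y\to x)\ge 1$). $\mathsf{SemCRL}$: the variety of semilinear commutative residuated lattices. $\mathsf{SemCIRL}$: its integral subvariety. $\mathsf{SemFL_e}$: the variety of semilinear commutative residuated lattices expanded with an additional constant $0$ (no conditions on $0$). $\mathsf{MTL}$: the variety of commutative integral residuated lattices with an additional constant $0$ satisfying $0\le x$ and the prelinearity identity $(x\to y)\vee(y\to x)=1$. An algebra is $n$-potent if it satisfies $x^n=x^{n+1}$. A V-formation in a class $\mathsf{K}$ is a tuple $(\mathbf{P},\mathbf{Q},\mathbf{R},i,j)$ with $\mathbf{P},\mathbf{Q},\mathbf{R}\in\mathsf{K}$ and $i\colon\mathbf{P}\to\mathbf{Q}$, $j\colon\mathbf{P}\to\mathbf{R}$ embeddings; an amalgam in $\mathsf{K}$ is $(\mathbf{D},h,k)$ with $\mathbf{D}\in\mathsf{K}$ and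 embeddings $h\colon\mathbf{Q}\to\mathbf{D}$, $k\colon\mathbf{R}\to\mathbf{D}$ with $h\circ i=k\circ j$. A class has the amalgamation property if every V-formation in it has an amalgam in it. *)

(* Defs.v *)
From Stdlib Require Import Arith.

(** Operations of a commutative residuated lattice (L, /\, \/, ., ->, 1).
    In the commutative case x\y = y/x is written x -> y. *)
Record crl_ops (T : Type) := CrlOps {
  rmeet : T -> T -> T;
  rjoin : T -> T -> T;
  rmul  : T -> T -> T;
  rimp  : T -> T -> T;
  rone  : T }.
Arguments rmeet {T} _ _ _.
Arguments rjoin {T} _ _ _.
Arguments rmul {T} _ _ _.
Arguments rimp {T} _ _ _.
Arguments rone {T} _.

Record fle_ops (T : Type) := FleOps {
  fcrl  : crl_ops T;
  rzero : T }.
Arguments fcrl {T} _.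
Arguments rzero {T} _.

Definition rle {T} (o : crl_ops T) (x y : T) : Prop := rmeet o x y = x.

Fixpoint rpow {T} (o : crl_ops T) (x : T) (k : nat) : T :=
  match k with
  | 0 => rone o
  | S k' => rmul o x (rpow o x k')
  end.

Definition is_CRL {T} (o : crl_ops T) : Prop :=
  (forall x y, rmeet o x y = rmeet o y x) /\
  (forall x y, rjoin o x y = rjoin o y x) /\
  (forall x y z, rmeet o x (rmeet o y z) = rmeet o (rmeet o x y) z) /\
  (forall x y z, rjoin o x (rjoin o y z) = rjoin o (rjoin o x y) z) /\
  (forall x y, rmeet o x (rjoin o x y) = x) /\
  (forall x y, rjoin o x (rmeet o x y) = x) /\
  (forall x y z, rmul o x (rmul o y z) = rmul o (rmul o x y) z) /\
  (forall x y, rmul o x y = rmul o y x) /\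
  (forall x, rmul o (rone o) x = x) /\
  (forall x, rmul o x (rone o) = x) /\
  (* residuation: xy <= z iff y <= x -> z  (x <= z/y = y -> z then follows
     by commutativity) *)
  (forall x y z, rle o (rmul o x y) z <-> rle o y (rimp o x z)).

(** Semilinearity for commutative residuated lattices, in its equational
    form (x -> y) \/ (y -> x) >= 1. *)
Definition semilinear {T} (o : crl_ops T) : Prop :=
  forall x y, rle o (rone o) (rjoin o (rimp o x y) (rimp o y x)).

Definition integral {T} (o : crl_ops T) : Prop :=
  forall x, rle o x (rone o).

Definition n_potent {T} (o : crl_ops T) (n : nat) : Prop :=
  forall x, rpow o x n = rpow o x (S n).

Definition SemCRL T (o : crl_ops T) : Prop := is_CRL o /\ semilinear o.
Definition SemCIRL T (o : crl_ops T) : Prop := SemCRL T o /\ integral o.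
Definition SemFLe T (o : fle_ops T) : Prop := SemCRL T (fcrl o).
Definition MTL T (o : fle_ops T) : Prop :=
  is_CRL (fcrl o) /\ integral (fcrl o) /\
  (forall x, rle (fcrl o) (rzero o) x) /\
  (forall x y, rjoin (fcrl o) (rimp (fcrl o) x y) (rimp (fcrl o) y x)
               = rone (fcrl o)).

Definition npot_crl (n : nat) (K : forall T, crl_ops T -> Prop) :
  forall T, crl_ops T -> Prop := fun T o => K T o /\ n_potent o n.
Definition npot_fle (n : nat) (K : forall T, fle_ops T -> Prop) :
  forall T, fle_ops T -> Prop := fun T o => K T o /\ n_potent (fcrl o) n.

Definition crl_hom {A B} (oA : crl_ops A) (oB : crl_ops B) (f : A -> B) : Prop :=
  (forall x y, f (rmeet oA x y) = rmeet oB (f x) (f y)) /\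
  (forall x y, f (rjoin oA x y) = rjoin oB (f x) (f y)) /\
  (forall x y, f (rmul oA x y) = rmul oB (f x) (f y)) /\
  (forall x y, f (rimp oA x y) = rimp oB (f x) (f y)) /\
  f (rone oA) = rone oB.

Definition crl_emb {A B} (oA : crl_ops A) (oB : crl_ops B) (f : A -> B) : Prop :=
  crl_hom oA oB f /\ (forall x y, f x = f y -> x = y).

Definition fle_emb {A B} (oA : fle_ops A) (oB : fle_ops B) (f : A -> B) : Prop :=
  crl_emb (fcrl oA) (fcrl oB) f /\ f (rzero oA) = rzero oB.

Definition AP_crl (K : forall T, crl_ops T -> Prop) : Prop :=
  forall (P Q R : Type) (oP : crl_ops P) (oQ : crl_ops Q) (oR : crl_ops R)
         (i : P -> Q) (j : P -> R),
    K P oP -> K Q oQ -> K R oR -> crl_emb oP oQ i -> crl_emb oP oR j ->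
    exists (D : Type) (oD : crl_ops D) (h : Q -> D) (k : R -> D),
      K D oD /\ crl_emb oQ oD h /\ crl_emb oR oD k /\
      (forall p, h (i p) = k (j p)).

Definition AP_fle (K : forall T, fle_ops T -> Prop) : Prop :=
  forall (P Q R : Type) (oP : fle_ops P) (oQ : fle_ops Q) (oR : fle_ops R)
         (i : P -> Q) (j : P -> R),
    K P oP -> K Q oQ -> K R oR -> fle_emb oP oQ i -> fle_emb oP oR j ->
    exists (D : Type) (oD : fle_ops D) (h : Q -> D) (k : R -> D),
      K D oD /\ fle_emb oQ oD h /\ fle_emb oR oD k /\
      (forall p, h (i p) = k (j p)).

(* Main.v *)
Require Import Defs.
From Stdlib Require Import Arith Lia.


Lemma L_meetC {T} {o:crl_ops T} : is_CRL o -> forall x y, rmeet o x y = rmeet o y x.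
Proof. intros H; apply H. Qed.
Lemma L_joinC {T} {o:crl_ops T} : is_CRL o -> forall x y, rjoin o x y = rjoin o y x.
Proof. intros H; apply H. Qed.
Lemma L_meetA {T} {o:crl_ops T} : is_CRL o -> forall x y z, rmeet o x (rmeet o y z) = rmeet o (rmeet o x y) z.
Proof. intros H; apply H. Qed.
Lemma L_joinA {T} {o:crl_ops T} : is_CRL o -> forall x y z, rjoin o x (rjoin o y z) = rjoin o (rjoin o x y) z.
Proof. intros H; apply H. Qed.
Lemma L_abs1 {T} {o:crl_ops T} : is_CRL o -> forall x y, rmeet o x (rjoin o x y) = x.
Proof. intros H; apply H. Qed.
Lemma L_abs2 {T} {o:crl_ops T} : is_CRL o -> forall x y, rjoin o x (rmeet o x y) = x.
Proof. intros H; apply H. Qed.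
Lemma L_mulA {T} {o:crl_ops T} : is_CRL o -> forall x y z, rmul o x (rmul o y z) = rmul o (rmul o x y) z.
Proof. intros H; apply H. Qed.
Lemma L_mulC {T} {o:crl_ops T} : is_CRL o -> forall x y, rmul o x y = rmul o y x.
Proof. intros H; apply H. Qed.
Lemma L_mul1l {T} {o:crl_ops T} : is_CRL o -> forall x, rmul o (rone o) x = x.
Proof. intros H; apply H. Qed.
Lemma L_mul1r {T} {o:crl_ops T} : is_CRL o -> forall x, rmul o x (rone o) = x.
Proof. intros H; apply H. Qed.
Lemma L_res {T} {o:crl_ops T} : is_CRL o -> forall x y z, rle o (rmul o x y) z <-> rle o y (rimp o x z).
Proof. intros H; apply H. Qed.

Lemma le_refl {T} {o:crl_ops T} : is_CRL o -> forall x, rle o x x.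
Proof.
  intros H x. unfold rle.
  pose proof (L_abs1 H x (rmeet o x x)) as E. rewrite (L_abs2 H) in E. exact E.
Qed.

Lemma le_trans {T} {o:crl_ops T} : is_CRL o -> forall x y z, rle o x y -> rle o y z -> rle o x z.
Proof.
  unfold rle; intros H x y z H1 H2.
  rewrite <- H1 at 1. rewrite <- (L_meetA H), H2. exact H1.
Qed.

Lemma le_antisym {T} {o:crl_ops T} : is_CRL o -> forall x y, rle o x y -> rle o y x -> x = y.
Proof.
  unfold rle; intros H x y H1 H2. rewrite <- H1. rewrite (L_meetC H). exact H2.
Qed.

Lemma le_join {T} {o:crl_ops T} : is_CRL o -> forall x y, rle o x y <-> rjoin o x y = y.
Proof.
  unfold rle; intros H x y; split; intro E.
  - rewrite <- E. rewrite (L_joinC H), (L_meetC H). apply (L_abs2 H).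
  - rewrite <- E. apply (L_abs1 H).
Qed.

Lemma join_lub {T} {o:crl_ops T} : is_CRL o -> forall x y z, rle o x z -> rle o y z -> rle o (rjoin o x y) z.
Proof.
  intros H x y z H1 H2. apply (le_join H). apply (le_join H) in H1. apply (le_join H) in H2.
  rewrite <- (L_joinA H), H2. exact H1.
Qed.

Lemma le_joinl {T} {o:crl_ops T} : is_CRL o -> forall x y, rle o x (rjoin o x y).
Proof. intros H x y. unfold rle. apply (L_abs1 H). Qed.
Lemma le_joinr {T} {o:crl_ops T} : is_CRL o -> forall x y, rle o y (rjoin o x y).
Proof. intros H x y. rewrite (L_joinC H). apply (le_joinl H). Qed.

Lemma mul_monor {T} {o:crl_ops T} : is_CRL o -> forall x y y', rle o y y' -> rle o (rmul o x y) (rmul o x y').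
Proof.
  intros H x y y' Hy. apply (L_res H). apply (le_trans H) with y'; auto.
  apply (L_res H). apply (le_refl H).
Qed.

Lemma mul_mono {T} {o:crl_ops T} : is_CRL o -> forall x x' y y', rle o x x' -> rle o y y' -> rle o (rmul o x y) (rmul o x' y').
Proof.
  intros H x x' y y' Hx Hy. apply (le_trans H) with (rmul o x y').
  - apply (mul_monor H); auto.
  - rewrite (L_mulC H x), (L_mulC H x'). apply (mul_monor H); auto.
Qed.

Lemma mul_join_le {T} {o:crl_ops T} : is_CRL o -> forall x y z w M,
  rle o (rmul o x z) M -> rle o (rmul o x w) M -> rle o (rmul o y z) M -> rle o (rmul o y w) M ->
  rle o (rmul o (rjoin o x y) (rjoin o z w)) M.
Proof.
  intros H x y z w M H1 H2 H3 H4. rewrite (L_mulC H). apply (L_res H).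
  apply (join_lub H); apply (L_res H); rewrite (L_mulC H); apply (L_res H); apply (join_lub H);
  apply (L_res H); auto.
Qed.

Lemma res_to {T} {o:crl_ops T} : is_CRL o -> forall x y z, rle o (rmul o x y) z -> rle o y (rimp o x z).
Proof. intros H x y z; apply (L_res H). Qed.
Lemma res_from {T} {o:crl_ops T} : is_CRL o -> forall x y z, rle o y (rimp o x z) -> rle o (rmul o x y) z.
Proof. intros H x y z; apply (L_res H). Qed.

Lemma key_D {T} {o:crl_ops T} : is_CRL o -> semilinear o ->
  forall A B Z E C,
  rimp o A Z = A -> rmul o A E = A -> rmul o A A = Z -> rimp o A A = rone o ->
  rimp o B Z = B -> rmul o B E = C -> rmul o B B = Z -> rimp o B C = E ->
  rmul o E E = E -> rle o (rone o) E.
Proof.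
  intros H SL A B Z E C hA1 hA2 hA3 hAA hB1 hB2 hB3 hB4 hE.
  set (u := rimp o A B). set (v := rimp o B A).
  assert (h1 : rle o (rmul o u A) B).
  { rewrite (L_mulC H). apply (res_from H). apply (le_refl H). }
  assert (h5 : rle o (rmul o v B) A).
  { rewrite (L_mulC H). apply (res_from H). apply (le_refl H). }
  assert (h2 : rle o (rmul o u B) A).
  { rewrite <- hA1. apply (res_to H). rewrite <- hB3, (L_mulA H), (L_mulC H A u).
    apply (mul_mono H); auto. apply (le_refl H). }
  assert (h6 : rle o (rmul o v A) B).
  { rewrite <- hB1. apply (res_to H). rewrite <- hA3, (L_mulA H), (L_mulC H B v).
    apply (mul_mono H); auto. apply (le_refl H). }
  assert (h4 : rle o (rmul o u u) E).
  { rewrite <- hB4. apply (res_to H). rewrite <- hB2.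
    rewrite (L_mulC H), <- (L_mulA H).
    apply (le_trans H) with (rmul o u A). apply (mul_monor H); auto.
    rewrite <- hA2, (L_mulA H). apply (mul_mono H); auto. apply (le_refl H). }
  assert (h8 : rle o (rmul o v v) E).
  { rewrite <- hB4. apply (res_to H). rewrite <- hB2.
    rewrite (L_mulC H), <- (L_mulA H).
    apply (le_trans H) with (rmul o v A). apply (mul_monor H); auto.
    rewrite <- hA2, (L_mulA H). apply (mul_mono H); auto. apply (le_refl H). }
  assert (h9 : rle o (rmul o u v) (rone o)).
  { rewrite <- hAA. apply (res_to H). rewrite (L_mulA H), (L_mulC H A u).
    apply (le_trans H) with (rmul o B v). apply (mul_mono H); auto. apply (le_refl H).
    rewrite (L_mulC H); auto. }
  assert (hs : rle o (rone o) (rjoin o u v)) by apply SL.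
  set (s := rjoin o u v). set (M := rjoin o E (rmul o u v)).
  assert (hss : rle o (rmul o s s) M).
  { apply (mul_join_le H).
    - apply (le_trans H) with E; auto. apply (le_joinl H).
    - apply (le_joinr H).
    - rewrite (L_mulC H). apply (le_joinr H).
    - apply (le_trans H) with E; auto. apply (le_joinl H). }
  assert (hMM : rle o (rmul o M M) E).
  { apply (mul_join_le H).
    - rewrite hE. apply (le_refl H).
    - rewrite <- (L_mul1r H E) at 2. apply (mul_monor H); auto.
    - rewrite (L_mulC H). rewrite <- (L_mul1r H E) at 2. apply (mul_monor H); auto.
    - rewrite <- hE. 
      assert (e1 : rmul o (rmul o u v) (rmul o u v) = rmul o (rmul o u u) (rmul o v v)).
      { rewrite <- !(L_mulA H). f_equal. rewrite (L_mulA H), (L_mulC H v u), <- (L_mulA H). reflexivity. }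
      rewrite e1. apply (mul_mono H); auto. }
  assert (h1s : rle o (rone o) (rmul o s s)).
  { rewrite <- (L_mul1l H (rone o)). apply (mul_mono H); auto. }
  apply (le_trans H) with (rmul o M M); auto.
  rewrite <- (L_mul1l H (rone o)). apply (mul_mono H); apply (le_trans H) with (rmul o s s); auto.
Qed.
Inductive TP := p0 | pe | p1.
Definition rkTP (x:TP) : nat := match x with p0 => 0 | pe => 1 | p1 => 2 end.
Definition mulTP (x y:TP) : TP := match x, y with p0, p0 => p0 | p0, pe => p0 | p0, p1 => p0 | pe, p0 => p0 | pe, pe => pe | pe, p1 => pe | p1, p0 => p0 | p1, pe => pe | p1, p1 => p1 end.
Definition impTP (x y:TP) : TP := match x, y with p0, p0 => p1 | p0, pe => p1 | p0, p1 => p1 | pe, p0 => p0 | pe, pe => p1 | pe, p1 => p1 | p1, p0 => p0 | p1, pe => pe | p1, p1 => p1 end.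
Definition meetTP (x y:TP) : TP := if Nat.leb (rkTP x) (rkTP y) then x else y.
Definition joinTP (x y:TP) : TP := if Nat.leb (rkTP x) (rkTP y) then y else x.
Definition oTP : crl_ops TP := CrlOps TP meetTP joinTP mulTP impTP p1.
Definition fTP : fle_ops TP := FleOps TP oTP p0.
Inductive TQ := q0 | qa | qe | q1.
Definition rkTQ (x:TQ) : nat := match x with q0 => 0 | qa => 1 | qe => 2 | q1 => 3 end.
Definition mulTQ (x y:TQ) : TQ := match x, y with q0, q0 => q0 | q0, qa => q0 | q0, qe => q0 | q0, q1 => q0 | qa, q0 => q0 | qa, qa => q0 | qa, qe => qa | qa, q1 => qa | qe, q0 => q0 | qe, qa => qa | qe, qe => qe | qe, q1 => qe | q1, q0 => q0 | q1, qa => qa | q1, qe => qe | q1, q1 => q1 end.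
Definition impTQ (x y:TQ) : TQ := match x, y with q0, q0 => q1 | q0, qa => q1 | q0, qe => q1 | q0, q1 => q1 | qa, q0 => qa | qa, qa => q1 | qa, qe => q1 | qa, q1 => q1 | qe, q0 => q0 | qe, qa => qa | qe, qe => q1 | qe, q1 => q1 | q1, q0 => q0 | q1, qa => qa | q1, qe => qe | q1, q1 => q1 end.
Definition meetTQ (x y:TQ) : TQ := if Nat.leb (rkTQ x) (rkTQ y) then x else y.
Definition joinTQ (x y:TQ) : TQ := if Nat.leb (rkTQ x) (rkTQ y) then y else x.
Definition oTQ : crl_ops TQ := CrlOps TQ meetTQ joinTQ mulTQ impTQ q1.
Definition fTQ : fle_ops TQ := FleOps TQ oTQ q0.
Inductive TR := r0 | rc | rb | re | r1.
Definition rkTR (x:TR) : nat := match x with r0 => 0 | rc => 1 | rb => 2 | re => 3 | r1 => 4 end.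
Definition mulTR (x y:TR) : TR := match x, y with r0, r0 => r0 | r0, rc => r0 | r0, rb => r0 | r0, re => r0 | r0, r1 => r0 | rc, r0 => r0 | rc, rc => r0 | rc, rb => r0 | rc, re => rc | rc, r1 => rc | rb, r0 => r0 | rb, rc => r0 | rb, rb => r0 | rb, re => rc | rb, r1 => rb | re, r0 => r0 | re, rc => rc | re, rb => rc | re, re => re | re, r1 => re | r1, r0 => r0 | r1, rc => rc | r1, rb => rb | r1, re => re | r1, r1 => r1 end.
Definition impTR (x y:TR) : TR := match x, y with r0, r0 => r1 | r0, rc => r1 | r0, rb => r1 | r0, re => r1 | r0, r1 => r1 | rc, r0 => rb | rc, rc => r1 | rc, rb => r1 | rc, re => r1 | rc, r1 => r1 | rb, r0 => rb | rb, rc => re | rb, rb => r1 | rb, re => r1 | rb, r1 => r1 | re, r0 => r0 | re, rc => rb | re, rb => rb | re, re => r1 | re, r1 => r1 | r1, r0 => r0 | r1, rc => rc | r1, rb => rb | r1, re => re | r1, r1 => r1 end.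
Definition meetTR (x y:TR) : TR := if Nat.leb (rkTR x) (rkTR y) then x else y.
Definition joinTR (x y:TR) : TR := if Nat.leb (rkTR x) (rkTR y) then y else x.
Definition oTR : crl_ops TR := CrlOps TR meetTR joinTR mulTR impTR r1.
Definition fTR : fle_ops TR := FleOps TR oTR r0.

Ltac brute := repeat (let x := fresh in intro x; destruct x); cbv; reflexivity.
Ltac brute_iff := repeat (let x := fresh in intro x; destruct x); cbv;
  split; let HH := fresh in intro HH; first [reflexivity | discriminate HH].
Ltac crl_tac := unfold is_CRL; repeat split; first [solve [brute] |
  solve [repeat match goal with v : TP |- _ => destruct v | v : TQ |- _ => destruct v | v : TR |- _ => destruct v end;
  let HH := fresh in intro HH; cbv in *; first [reflexivity | discriminate HH]]].

Lemma TP_crl : is_CRL oTP.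
Proof. crl_tac. Qed.
Lemma TQ_crl : is_CRL oTQ.
Proof. crl_tac. Qed.
Lemma TR_crl : is_CRL oTR.
Proof. crl_tac. Qed.

Definition iQ (x:TP) : TQ := match x with p0 => q0 | pe => qe | p1 => q1 end.
Definition jR (x:TP) : TR := match x with p0 => r0 | pe => re | p1 => r1 end.

Ltac dall := repeat match goal with v : TP |- _ => destruct v | v : TQ |- _ => destruct v | v : TR |- _ => destruct v end.
Ltac fin_tac := intros; unfold integral, semilinear, rle; intros; dall; cbv; reflexivity.

Lemma embQ : crl_emb oTP oTQ iQ.
Proof. split; [repeat split; fin_tac | intros x y Hxy; dall; try reflexivity; discriminate Hxy]. Qed.
Lemma embR : crl_emb oTP oTR jR.
Proof. split; [repeat split; fin_tac | intros x y Hxy; dall; try reflexivity; discriminate Hxy]. Qed.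
Lemma fembQ : fle_emb fTP fTQ iQ.
Proof. split; [exact embQ | reflexivity]. Qed.
Lemma fembR : fle_emb fTP fTR jR.
Proof. split; [exact embR | reflexivity]. Qed.

Lemma pot_gen {T} (o:crl_ops T) :
  (forall x, rmul o x (rmul o x (rmul o x (rone o))) = rmul o x (rmul o x (rone o))) ->
  forall m x, rpow o x (S (S m)) = rmul o x (rmul o x (rone o)).
Proof.
  intros Hp m x. induction m as [|m IH]. reflexivity.
  change (rmul o x (rpow o x (S (S m))) = rmul o x (rmul o x (rone o))).
  rewrite IH. apply Hp.
Qed.

Lemma npot_of {T} (o:crl_ops T) :
  (forall x, rmul o x (rmul o x (rmul o x (rone o))) = rmul o x (rmul o x (rone o))) ->
  forall n, 2 <= n -> n_potent o n.
Proof.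
  intros Hp n Hn x. destruct n as [|[|m]]; [exfalso; lia | exfalso; lia | ].
  rewrite (pot_gen o Hp m x). rewrite (pot_gen o Hp (S m) x). reflexivity.
Qed.

Ltac class_tac X := 
  first [ exact X
        | intros; dall; cbv; reflexivity ].

Lemma TP_MTL : MTL TP fTP.
Proof. split; [change (is_CRL (fcrl fTP)) with (is_CRL oTP); exact TP_crl | repeat split; fin_tac]. Qed.
Lemma TQ_MTL : MTL TQ fTQ.
Proof. split; [change (is_CRL (fcrl fTQ)) with (is_CRL oTQ); exact TQ_crl | repeat split; fin_tac]. Qed.
Lemma TR_MTL : MTL TR fTR.
Proof. split; [change (is_CRL (fcrl fTR)) with (is_CRL oTR); exact TR_crl | repeat split; fin_tac]. Qed.
Lemma TP_SC : SemCIRL TP oTP.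
Proof. split; [split; [exact TP_crl | fin_tac] | fin_tac]. Qed.
Lemma TQ_SC : SemCIRL TQ oTQ.
Proof. split; [split; [exact TQ_crl | fin_tac] | fin_tac]. Qed.
Lemma TR_SC : SemCIRL TR oTR.
Proof. split; [split; [exact TR_crl | fin_tac] | fin_tac]. Qed.
Lemma TP_pot : forall n, 2 <= n -> n_potent oTP n.
Proof. apply npot_of. fin_tac. Qed.
Lemma TQ_pot : forall n, 2 <= n -> n_potent oTQ n.
Proof. apply npot_of. fin_tac. Qed.
Lemma TR_pot : forall n, 2 <= n -> n_potent oTR n.
Proof. apply npot_of. fin_tac. Qed.

Lemma no_amalg {D} (oD : crl_ops D) (h : TQ -> D) (k : TR -> D) :
  SemCRL D oD -> crl_emb oTQ oD h -> crl_emb oTR oD k ->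
  (forall p, h (iQ p) = k (jR p)) -> False.
Proof.
  intros [HD SL] [[hm [hj [hmul [himp h1]]]] hinj] [[km [kj [kmul [kimp k1]]]] kinj] Hc.
  assert (Z : h q0 = k r0) by exact (Hc p0).
  assert (Ee : h qe = k re) by exact (Hc pe).
  assert (R1 : rle oD (rone oD) (h qe)).
  { apply (key_D HD SL (h qa) (k rb) (h q0) (h qe) (k rc)).
    - rewrite <- himp. reflexivity.
    - rewrite <- hmul. reflexivity.
    - rewrite <- hmul. reflexivity.
    - rewrite <- himp, <- h1. reflexivity.
    - rewrite Z, <- kimp. reflexivity.
    - rewrite Ee, <- kmul. reflexivity.
    - rewrite Z, <- kmul. reflexivity.
    - rewrite Ee, <- kimp. reflexivity.
    - rewrite <- hmul. reflexivity. }
  unfold rle in R1. rewrite <- h1, <- hm in R1.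
  apply hinj in R1. discriminate R1.
Qed.

Lemma notAP_crl (K : forall T, crl_ops T -> Prop) :
  K TP oTP -> K TQ oTQ -> K TR oTR -> (forall D oD, K D oD -> SemCRL D oD) -> ~ AP_crl K.
Proof.
  intros HP HQ HR HK AP.
  destruct (AP TP TQ TR oTP oTQ oTR iQ jR HP HQ HR embQ embR) as (D & oD & h & k & HD & Hh & Hk & Hc).
  exact (no_amalg oD h k (HK _ _ HD) Hh Hk Hc).
Qed.

Lemma notAP_fle (K : forall T, fle_ops T -> Prop) :
  K TP fTP -> K TQ fTQ -> K TR fTR -> (forall D oD, K D oD -> SemCRL D (fcrl oD)) -> ~ AP_fle K.
Proof.
  intros HP HQ HR HK AP.
  destruct (AP TP TQ TR fTP fTQ fTR iQ jR HP HQ HR fembQ fembR) as (D & oD & h & k & HD & Hh & Hk & Hc).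
  exact (no_amalg (fcrl oD) h k (HK _ _ HD) (proj1 Hh) (proj1 Hk) Hc).
Qed.

Lemma MTL_Sem D (oD : fle_ops D) : MTL D oD -> SemCRL D (fcrl oD).
Proof.
  intros [HC [_ [_ HL]]]. split; auto. intros x y. rewrite HL. apply (le_refl HC).
Qed.

Theorem mainTheorem5 :
  ~ AP_crl SemCRL /\ ~ AP_crl SemCIRL /\ ~ AP_fle SemFLe /\ ~ AP_fle MTL /\
  (forall n : nat, 2 <= n ->
     ~ AP_crl (npot_crl n SemCRL) /\ ~ AP_crl (npot_crl n SemCIRL) /\
     ~ AP_fle (npot_fle n SemFLe) /\ ~ AP_fle (npot_fle n MTL)).
Proof.
  split; [|split; [|split; [|split]]].
  - apply notAP_crl; try apply TP_SC; try apply TQ_SC; try apply TR_SC; auto.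
  - apply notAP_crl; try apply TP_SC; try apply TQ_SC; try apply TR_SC. intros D oD [H _]; exact H.
  - apply notAP_fle; try apply TP_SC; try apply TQ_SC; try apply TR_SC; auto.
  - apply notAP_fle; try apply TP_MTL; try apply TQ_MTL; try apply TR_MTL. exact MTL_Sem.
  - intros n Hn. split; [|split; [|split]].
    + apply notAP_crl; try (split; [apply TP_SC | apply TP_pot; exact Hn]);
        try (split; [apply TQ_SC | apply TQ_pot; exact Hn]);
        try (split; [apply TR_SC | apply TR_pot; exact Hn]).
      intros D oD [H _]; exact H.
    + apply notAP_crl; try (split; [apply TP_SC | apply TP_pot; exact Hn]);
        try (split; [apply TQ_SC | apply TQ_pot; exact Hn]);
        try (split; [apply TR_SC | apply TR_pot; exact Hn]).
      intros D oD [[H _] _]; exact H.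
    + apply notAP_fle; try (split; [apply TP_SC | apply TP_pot; exact Hn]);
        try (split; [apply TQ_SC | apply TQ_pot; exact Hn]);
        try (split; [apply TR_SC | apply TR_pot; exact Hn]).
      intros D oD [H _]; exact H.
    + apply notAP_fle; try (split; [apply TP_MTL | apply TP_pot; exact Hn]);
        try (split; [apply TQ_MTL | apply TQ_pot; exact Hn]);
        try (split; [apply TR_MTL | apply TR_pot; exact Hn]).
      intros D oD [H _]; exact (MTL_Sem D oD H).
Qed.
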